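(* Let $S$ be a locally compact Hausdorff space with Borel $\sigma$-algebra $\mathscr{S}$, let $N>n$, and let $X=(X_1,\ldots,X_n)$ be an exchangeable random element of $S^n$ such that the law of $X_1$ is tight. If $\mathcal L$ is an extending functional (for $n$, $N$ and the law of $X$) with $\|\mathcal L\|=1$, then the restriction of $\mathcal L$ to the space $C_c(S^N)$ of continuous compactly supported functions on $S^N$ has norm $1$ (with respect to the sup norm).
   Context: $b(S^k)$ is the space of bounded measurable real functions on $S^k$ with the sup norm. With $\mathfrak S[n,N]$ the set of injections $\{1,\ldots,n\}\to\{1,\ldots,N\}$ and $(N)_n=N(N-1)\cdots(N-n+1)$, $U^N_ng(x_1,\ldots,x_N)=\frac1{(N)_n}\sum_{\sigma\in\mathfrak S[n,N]}g(x_{\sigma(1)},\ldots,x_{\sigma(n)})$. The primitive extending functional $\mathcal E$ on $U^N_n(b(S^n))$ is $\mathcal E(U^N_ng)=\mathbb{E}\,g(X)$ (well defined). An extending functional is a linear functional $\mathcal L:b(S^N)\to\mathbb{R}$ which is invariant under permutations of the arguments of its input, agrees with $\mathcal E$ on $U^N_n(b(S^n))$, and has $\|\mathcal L\|=\|\mathcal E\|$. A probability measure $P$ on $S$ is tight if for every $\epsilon>0$ there is a compact $K$ with $P(K)\ge1-\epsilon$. *)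

(* Defs.v *)
From HB Require Import structures.
From mathcomp Require Import all_boot all_order all_algebra.
From mathcomp Require Import all_classical all_reals all_analysis.
From mathcomp Require Import fingroup perm.
Set Implicit Arguments. Unset Strict Implicit. Unset Printing Implicit Defensive.
Import Order.TTheory GRing.Theory Num.Theory.
Import numFieldNormedType.Exports.
Local Open Scope classical_set_scope.
Local Open Scope ring_scope.

Definition prodS (S : topologicalType) (k : nat) : topologicalType :=
  prod_topology (fun _ : 'I_k => S).

Definition borel_set (T : topologicalType) (A : set T) : Prop :=
  <<s [set: T], open >> A.

Definition borel_fun (R : realType) (T : topologicalType) (f : T -> R) : Prop :=
  forall B : set R, open B -> borel_set (f @^-1` B).

Definition supnorm (R : realType) (T : Type) (f : T -> R) : \bar R :=
  ereal_sup (range (fun x => (`|f x|)%:E)).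

Definition bfun (R : realType) (S : topologicalType) (k : nat)
    (f : prodS S k -> R) : Prop :=
  borel_fun f /\ exists M : R, forall x, `|f x| <= M.

Definition ccfun (R : realType) (S : topologicalType) (k : nat)
    (f : prodS S k -> R) : Prop :=
  continuous f /\ compact (closure [set x | f x != 0]).

Definition opnorm (R : realType) (T : Type) (D : set (T -> R))
    (L : (T -> R) -> R) : \bar R :=
  ereal_sup [set (`|L f|)%:E | f in [set f | D f /\ (supnorm f <= 1)%E]].

Definition reindex (S : topologicalType) (n N : nat) (s : 'I_n -> 'I_N)
    (x : prodS S N) : prodS S n := fun i => x (s i).

Definition UNn (R : realType) (S : topologicalType) (n N : nat)
    (g : prodS S n -> R) : prodS S N -> R :=
  fun x => ((N ^_ n)%:R)^-1 *
    \sum_(s : {ffun 'I_n -> 'I_N} | injectiveb s) g (reindex s x).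
Arguments UNn {R S n} N g.

Definition random_element (d : measure_display) (Omega : measurableType d)
    (S : topologicalType) (n : nat) (X : Omega -> prodS S n) : Prop :=
  forall A : set (prodS S n), borel_set A -> measurable (X @^-1` A).

Definition exchangeable (R : realType) (d : measure_display)
    (Omega : measurableType d) (P : probability Omega R)
    (S : topologicalType) (n : nat) (X : Omega -> prodS S n) : Prop :=
  forall (s : 'S_n) (A : set (prodS S n)), borel_set A ->
    P ((fun w => reindex (fun i => s i) (X w)) @^-1` A) = P (X @^-1` A).

Definition tight_coord (R : realType) (d : measure_display)
    (Omega : measurableType d) (P : probability Omega R)
    (S : topologicalType) (n : nat) (X : Omega -> prodS S n) (i : 'I_n) : Prop :=
  forall eps : R, 0 < eps -> exists K : set S, compact K /\
    (P ((fun w => X w i) @^-1` K) >= (1 - eps)%:E)%E.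

(* The primitive extending functional E on U^N_n(b(S^n)): E(U g) = E g(X);
   its norm (sup norm on S^N). *)
Definition primitive_norm (R : realType) (d : measure_display)
    (Omega : measurableType d) (P : probability Omega R)
    (S : topologicalType) (n N : nat) (X : Omega -> prodS S n) : \bar R :=
  ereal_sup [set (`| \int[P]_w (g (X w))%:E |)%E
            | g in [set g | bfun g /\ (supnorm (UNn N g) <= 1)%E]].

Definition extending_functional (R : realType) (d : measure_display)
    (Omega : measurableType d) (P : probability Omega R)
    (S : topologicalType) (n N : nat) (X : Omega -> prodS S n)
    (L : (prodS S N -> R) -> R) : Prop :=
  [/\ (forall (a : R) (f g : prodS S N -> R), bfun f -> bfun g ->
         L (fun x => a * f x + g x) = a * L f + L g),
      (forall (s : 'S_N) (f : prodS S N -> R), bfun f ->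
         L (fun x => f (reindex (fun i => s i) x)) = L f),
      (forall g : prodS S n -> R, bfun g ->
         ((L (UNn N g))%:E = \int[P]_w (g (X w))%:E)%E) &
      opnorm (@bfun R S N) L = primitive_norm P N X].
Arguments primitive_norm {R d Omega} P {S n} N X.
Arguments extending_functional {R d Omega} P {S n} N X L.

(* Main.v *)
Require Import Defs.
From HB Require Import structures.
From mathcomp Require Import all_boot all_order all_algebra.
From mathcomp Require Import all_classical all_reals all_analysis.
From mathcomp Require Import fingroup perm.
From mathcomp Require Import measurable_realfun.
Import Order.TTheory GRing.Theory Num.Theory.
Import numFieldNormedType.Exports.
From mathcomp Require Import lra.
Local Open Scope classical_set_scope.
Local Open Scope ring_scope.

Definition PT (T : topologicalType) (x : T) : pointedType :=
  HB.pack_for pointedType T (isPointed.Build T x).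
Arguments PT : clear implicits.
Definition MT (T : topologicalType) (x : T) :=
  g_sigma_algebraType (@open T : set (set (PT T x))).

Arguments MT : clear implicits.
Lemma borel_mfun (R : realType) (T : topologicalType) (x0 : T) (f : T -> R) :
  borel_fun f <-> measurable_fun (setT : set (MT T x0)) (f : MT T x0 -> R).
Proof.
split.
- move=> bf; apply: (measurability _ (RGenOpens.measurableE R)).
  move=> _ [_ [a [b ->]] <-]; rewrite setTI; apply: bf; exact: interval_open.
- move=> mf B oB; have := mf measurableT B (open_measurable oB).
  by rewrite setTI.
Qed.

Lemma borel_closed (T : topologicalType) (C : set T) : closed C -> borel_set C.
Proof.
move=> cC; rewrite -(setCK C) -setTD; apply: sigma_algebraCD.
apply: sub_sigma_algebra; exact: closed_openC.
Qed.

Lemma borel_fun_cont (R : realType) (T : topologicalType) (f : T -> R) :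
  continuous f -> borel_fun f.
Proof. by move=> /continuousP cf B oB; apply: sub_sigma_algebra; exact: cf. Qed.

Lemma borel_fun_lin (R : realType) (T : topologicalType) (x0 : T) (a : R)
  (f g : T -> R) : borel_fun f -> borel_fun g ->
  borel_fun (fun x => a * f x + g x).
Proof.
move=> /(borel_mfun _ _ x0) mf /(borel_mfun _ _ x0) mg; apply/(borel_mfun _ _ x0).
apply: measurable_funD => //; apply: measurable_funM => //.
Qed.

Lemma borel_fun_sum (R : realType) (T : topologicalType) (x0 : T) (I : Type)
  (s : seq I) (P : pred I) (h : I -> T -> R) :
  (forall i, borel_fun (h i)) -> borel_fun (fun x => \sum_(i <- s | P i) h i x).
Proof.
move=> hh; apply/(borel_mfun _ _ x0).
rewrite (_ : (fun x => _) = fun x => \sum_(i <- s) (if P i then h i x else 0)); last first.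
  by apply: funext => x; rewrite big_mkcond.
apply: measurable_sum => i; case: (P i); last exact: measurable_cst.
exact/(borel_mfun _ _ x0).
Qed.

Lemma borel_fun_indic (R : realType) (T : topologicalType) (x0 : T) (C : set T) :
  borel_set C -> borel_fun (\1_C : T -> R).
Proof.
move=> bC; apply/(borel_mfun _ _ x0); exact: measurable_indic.
Qed.

Lemma borel_fun_cst (R : realType) (T : topologicalType) (x0 : T) (c : R) :
  borel_fun (fun _ : T => c).
Proof. apply/(borel_mfun _ _ x0); exact: measurable_cst. Qed.
Lemma supnorm_le1 (R : realType) (T : Type) (f : T -> R) :
  (forall x, `|f x| <= 1) -> (supnorm f <= 1)%E.
Proof. by move=> h; apply/ereal_supP => _ [x _ <-]; rewrite lee_fin. Qed.

Lemma supnorm_le1P (R : realType) (T : Type) (f : T -> R) :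
  (supnorm f <= 1)%E -> forall x, `|f x| <= 1.
Proof.
move=> /ereal_supP h x; rewrite -lee_fin; apply: h; by exists x.
Qed.

Lemma opnorm_ub (R : realType) (T : Type) (D : set (T -> R)) L f :
  D f -> (supnorm f <= 1)%E -> ((`|L f|)%:E <= opnorm D L)%E.
Proof. by move=> Df sf; apply: ereal_sup_ubound; exists f. Qed.

Lemma cc_bfun (R : realType) (S : topologicalType) (k : nat) (f : prodS S k -> R) :
  ccfun f -> bfun f.
Proof.
case=> cf cpt; split; first exact: borel_fun_cont.
have cimg : compact (f @` closure [set x | f x != 0]).
  by apply: continuous_compact => //; exact: continuous_subspaceT.
have /compact_bounded [M [_ HM]] := cimg.
exists (Num.max (M + 1) 0) => x.
have [->|fx0] := eqVneq (f x) 0; first by rewrite normr0 le_max lexx orbT.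
rewrite le_max; apply/orP; left; apply: HM; first by rewrite ltrDl.
by exists x => //; apply: subset_closure.
Qed.
Lemma ury (R : realType) (S : topologicalType) (hS : hausdorff_space S)
  (lcS : locally_compact [set: S]) (K : set S) (cK : compact K) :
  exists (f0 : S -> R) (W : set S), [/\ continuous f0,
    forall x, 0 <= f0 x <= 1, forall x, K x -> f0 x = 1,
    compact W /\ closed W & forall x, f0 x != 0 -> W x].
Proof.
pose O := one_point_compactification S.
have hO : hausdorff_space O := one_point_compactification_hausdorff lcS hS.
have nO : normal_space O.
  apply: compact_normal => //; exact: one_point_compactification_compact.
have cB : compact (Some @` K : set O).
  apply: continuous_compact => //; apply: continuous_subspaceT.
  exact: one_point_compactification_some_continuous.
have clA : closed ([set None] : set O) by apply: compact_closed => //; exact: compact_set1.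
have clB : closed (Some @` K : set O) by exact: compact_closed.
have AB0 : [set None] `&` (Some @` K : set O) = set0.
  by apply/seteqP; split => // y [/= -> [z _]].
have := (normal_separatorP (R:=R)).1 nO _ _ clA clB AB0.
move=> /(uniform_separatorP (R:=R)) [g [cg g01 g0 g1]].
have gN : g None = 0 by apply: (g0 (g None)); exists None.
have gK x : K x -> g (Some x) = 1 by move=> Kx; apply: g1; exists (Some x) => //; exists x.
have g01x y : 0 <= g y <= 1.
  by move: (g01 (g y) (ex_intro2 _ _ y I erefl)); rewrite /= in_itv.
have nV : nbhs (None : O) (g @^-1` `]-oo, 1/2[).
  apply: (cg None); rewrite /= gN; apply: open_nbhs_nbhs; split; first exact: interval_open.
  by rewrite /= in_itv /=.
have [W [cW clW] WV] := nV.
pose f0 := fun x : S => Num.max 0 (2 * g (Some x) - 1).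
exists f0, W; split.
- have cgS : continuous (fun x : S => g (Some x)).
    move=> x; have := continuous_comp (one_point_compactification_some_continuous x) (cg (Some x)).
    by [].
  have c2 : continuous (fun x : S => 2 * g (Some x) - 1).
    move=> x; change (continuous_at x ((fun y : S => (fun=> 2) y * g (Some y)) \+ (fun=> -1))).
    apply: continuousD; last exact: cst_continuous.
    change (continuous_at x ((fun=> 2) \* (fun y : S => g (Some y)))).
    by apply: continuousM; [exact: cst_continuous|exact: cgS].
  move=> x; have := @continuous_max R S (fun=> 0) (fun y : S => 2 * g (Some y) - 1) x (@cst_continuous _ _ 0 x) (c2 x).
  by [].
- move=> x; rewrite /f0 le_max lexx /= ge_max ler01 /=.
  by have /andP[_ ?] := g01x (Some x); lra.
- by move=> x Kx; rewrite /f0 gK // maxEle ifT; lra.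
- by [].
- move=> x; rewrite /f0 => fx; apply: contrapT => Wx.
  have : (g @^-1` `]-oo, 1/2[) (Some x) by apply: WV; left; exists x.
  rewrite /= in_itv /= => gx.
  by move: fx; rewrite maxEle ifF ?eqxx //; apply/negbTE; rewrite -ltNge; lra.
Qed.
Lemma cont_coord (R : realType) (S : topologicalType) (k : nat) (f0 : S -> R)
  (i : 'I_k) : continuous f0 -> continuous (fun x : prodS S k => f0 (x i)).
Proof.
move=> cf x.
have := continuous_comp (@proj_continuous _ (fun _ : 'I_k => S) i x) (cf (x i)).
by [].
Qed.

Lemma cont_prod (R : realType) (S : topologicalType) (k : nat) (f0 : S -> R)
  (s : seq 'I_k) : continuous f0 ->
  continuous (fun x : prodS S k => \prod_(i <- s) f0 (x i)).
Proof.
move=> cf; elim: s => [|a s IH].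
  rewrite (_ : (fun x => _) = fun=> 1); last by apply: funext => x; rewrite big_nil.
  by move=> x; exact: cst_continuous.
rewrite (_ : (fun x => _) = (fun x : prodS S k => f0 (x a)) \* (fun x => \prod_(i <- s) f0 (x i))); last first.
  by apply: funext => x; rewrite big_cons.
by move=> x; apply: continuousM; [exact: cont_coord|exact: IH].
Qed.

Lemma closed_coord (S : topologicalType) (k : nat) (W : set S) :
  closed W -> closed [set x : prodS S k | forall i, W (x i)].
Proof.
move=> cW.
rewrite (_ : [set x | _] = \bigcap_(i in [set: 'I_k]) (proj i @^-1` W)); last first.
  by apply/seteqP; split => x h; [move=> i _; exact: h | move=> i; exact: h i I].
apply: closed_bigI => i _; apply: closed_comp => // x _.
exact: proj_continuous.
Qed.

Lemma prodfun (R : realType) (S : topologicalType) (k : nat) (f0 : S -> R)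
  (W : set S) : continuous f0 -> (forall x, 0 <= f0 x <= 1) ->
  compact W -> closed W -> (forall x, f0 x != 0 -> W x) ->
  ccfun (fun x : prodS S k => \prod_(i < k) f0 (x i)) /\
  (forall x : prodS S k, 0 <= \prod_(i < k) f0 (x i) <= 1).
Proof.
move=> cf f01 cW clW fW; split; last first.
  move=> x; apply/andP; split.
    by apply: prodr_ge0 => i _; have /andP[] := f01 (x i).
  by apply: prodr_ile1 => i _; exact: f01.
split; first exact: cont_prod.
have cWN : compact [set x : prodS S k | forall i, W (x i)].
  exact: (@tychonoff _ (fun _ : 'I_k => S) (fun=> W)).
apply: (subclosed_compact _ cWN); first exact: closed_closure.
have := @closed_coord S k W clW; rewrite closure_id => ->.
apply: closureS => x /= px i; apply: fW.
move: px; apply: contra => /eqP h; apply/prodf_eq0; exists i => //; rewrite h.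
exact: eqxx.
Qed.
Lemma sum_inj1 (R : realType) (n N : nat) :
  \sum_(s : {ffun 'I_n -> 'I_N} | injectiveb s) (1 : R) = (N ^_ n)%:R.
Proof.
rewrite sumr_const.
have -> : #|[pred s : {ffun 'I_n -> 'I_N} | injectiveb s]| = N ^_ n.
  by have := card_inj_ffuns 'I_n 'I_N; rewrite !card_ord cardsE => <-.
by [].
Qed.

Lemma cnt_sym (R : realType) (n N : nat) (i0 : 'I_n) (j j' : 'I_N) :
  \sum_(s : {ffun 'I_n -> 'I_N} | injectiveb s) (((s i0 == j) : nat)%:R : R) =
  \sum_(s : {ffun 'I_n -> 'I_N} | injectiveb s) (((s i0 == j') : nat)%:R : R).
Proof.
pose t := tperm j j'.
pose h := fun s : {ffun 'I_n -> 'I_N} => [ffun i => t (s i)].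
have hinj : injective h.
  move=> s1 s2 /ffunP e; apply/ffunP => i; have := e i; rewrite !ffunE.
  exact: perm_inj.
rewrite (reindex_inj hinj); apply: eq_big => s.
  apply/injectiveP/injectiveP => si.
    by move=> a b e; apply: si; rewrite /h !ffunE e.
  by move=> a b; rewrite /h !ffunE => /perm_inj /si.
move=> _; rewrite /h ffunE (canF_eq (tpermK j j')) /t tpermL.
by [].
Qed.

Lemma cnt_val (R : realType) (n N : nat) (i0 : 'I_n) (j : 'I_N) :
  N%:R * \sum_(s : {ffun 'I_n -> 'I_N} | injectiveb s) (((s i0 == j) : nat)%:R : R)
  = (N ^_ n)%:R.
Proof.
rewrite -sum_inj1.
have e : \sum_(j' < N) \sum_(s : {ffun 'I_n -> 'I_N} | injectiveb s)
           (((s i0 == j') : nat)%:R : R)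
        = \sum_(s : {ffun 'I_n -> 'I_N} | injectiveb s) (1 : R).
  rewrite exchange_big /=; apply: eq_bigr => s _.
  rewrite (bigD1 (s i0)) //= eqxx big1 ?addr0 // => k /negbTE.
  by rewrite eq_sym => ->.
rewrite -e; symmetry.
transitivity (\sum_(k < N) \sum_(s : {ffun 'I_n -> 'I_N} | injectiveb s)
           (((s i0 == j) : nat)%:R : R)).
  by apply: eq_bigr => k _; exact: (cnt_sym R n N i0 k j).
by rewrite sumr_const card_ord mulr_natl.
Qed.
Lemma u_props (R : realType) (S : topologicalType) (n N : nat) (K : set S)
  (i0 : 'I_n) (hnN : (n <= N)%N) (x : prodS S N) :
  let u := UNn N (fun y : prodS S n => (\1_(~` K) (y i0) : R)) in
  0 <= u x <= 1 /\ (forall j, ~ K (x j) -> 1 <= N%:R * u x).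
Proof.
move=> u.
have c0 : 0 < (N ^_ n)%:R :> R by rewrite ltr0n ffact_gt0.
have ind01 (y : S) : 0 <= (\1_(~` K) y : R) <= 1.
  by rewrite /indic; case: (y \in ~` K); rewrite ?lexx ?ler01.
split.
  rewrite /u /UNn; apply/andP; split.
    apply: mulr_ge0; first by rewrite invr_ge0 ltW.
    by apply: sumr_ge0 => s _; have /andP[] := ind01 (x (s i0)).
  rewrite ler_pdivrMl // mulr1 -sum_inj1; apply: ler_sum => s _.
  by have /andP[] := ind01 (x (s i0)).
move=> j nKj; rewrite /u /UNn mulrA.
have le : \sum_(s : {ffun 'I_n -> 'I_N} | injectiveb s) (((s i0 == j) : nat)%:R : R)
   <= \sum_(s : {ffun 'I_n -> 'I_N} | injectiveb s) (\1_(~` K) (Defs.reindex s x i0) : R).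
  apply: ler_sum => s _; rewrite /Defs.reindex.
  have [e|_] := eqVneq (s i0) j; last by have /andP[] := ind01 (x (s i0)).
  by rewrite e /indic mem_set.
have pos : 0 <= N%:R * (N ^_ n)%:R^-1 :> R.
  by rewrite mulr_ge0 // invr_ge0 ltW.
apply: (le_trans _ (ler_wpM2l pos le)).
rewrite (mulrC N%:R) -mulrA cnt_val mulVf //; exact: lt0r_neq0.
Qed.

Lemma U_one (R : realType) (S : topologicalType) (n N : nat) (hnN : (n <= N)%N) :
  UNn N (fun _ : prodS S n => (1 : R)) = (fun _ => 1).
Proof.
apply: funext => x; rewrite /UNn sum_inj1 mulVf //.
by rewrite pnatr_eq0 -lt0n ffact_gt0.
Qed.
Lemma bfun_cst (R : realType) (S : topologicalType) (k : nat) (x0 : prodS S k) (c : R) :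
  bfun (fun _ : prodS S k => c).
Proof. split; first exact: borel_fun_cst. by exists `|c|. Qed.

Lemma bfun_lin (R : realType) (S : topologicalType) (k : nat) (x0 : prodS S k) (a : R)
  (f g : prodS S k -> R) : bfun f -> bfun g -> bfun (fun x => a * f x + g x).
Proof.
move=> [bf [M1 hM1]] [bg [M2 hM2]]; split; first exact: borel_fun_lin.
exists (`|a| * M1 + M2) => x.
apply: (le_trans (ler_normD _ _)); apply: lerD => //.
by rewrite normrM; apply: ler_wpM2l.
Qed.

Lemma borel_coord (S : topologicalType) (k : nat) (K : set S) (j : 'I_k) :
  closed K -> borel_set [set x : prodS S k | ~ K (x j)].
Proof.
move=> cK; apply: sub_sigma_algebra.
rewrite (_ : [set x | _] = proj j @^-1` (~` K)) //.
apply: open_comp; last exact: closed_openC.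
move=> x _; exact: proj_continuous.
Qed.

Lemma borel_coordK (S : topologicalType) (k : nat) (K : set S) (j : 'I_k) :
  closed K -> borel_set [set x : prodS S k | K (x j)].
Proof.
move=> cK; apply: borel_closed.
rewrite (_ : [set x | _] = proj j @^-1` K) //.
apply: closed_comp => // x _; exact: proj_continuous.
Qed.

Lemma borel_indic_coord (R : realType) (S : topologicalType) (k : nat) (x0 : prodS S k)
  (K : set S) (j : 'I_k) :
  closed K -> borel_fun (fun x : prodS S k => (\1_(~` K) (x j) : R)).
Proof.
move=> cK; have := @borel_fun_indic R _ x0 _ (@borel_coord S k K j cK).
by [].
Qed.
Theorem lemma11 (R : realType) (S : topologicalType)
  (hS : hausdorff_space S) (lcS : locally_compact [set: S])
  (n N : nat) (hn : (0 < n)%N) (hnN : (n < N)%N)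
  (d : measure_display) (Omega : measurableType d) (P : probability Omega R)
  (X : Omega -> prodS S n) (hX : random_element X)
  (hexch : exchangeable P X) (htight : tight_coord P X (Ordinal hn))
  (L : (prodS S N -> R) -> R)
  (hL : extending_functional P N X L)
  (hnorm : opnorm (@bfun R S N) L = 1%E) :
  opnorm (@ccfun R S N) L = 1%E.
Proof.
case: hL => hlin _ hE _.
set i0 := Ordinal hn.
have hnN' : (n <= N)%N by apply: ltnW.
have N0 : (0 < N)%N by apply: leq_ltn_trans hnN.
pose z0 : prodS S n := X point.
pose y0 : prodS S N := fun _ => X point i0.
have bc (c : R) : bfun (fun _ : prodS S N => c) by exact: bfun_cst.
have bl (a : R) (f g : prodS S N -> R) : bfun f -> bfun g -> bfun (fun x : prodS S N => a * f x + g x).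
  by move=> ? ?; exact: bfun_lin.
have L0 : L (fun _ => 0) = 0.
  have := hlin 1 (fun _ => 0) (fun _ => 0) (bc 0) (bc 0).
  rewrite (_ : (fun x => 1 * 0 + 0) = fun _ => 0); last first.
    by apply: funext => x; rewrite mul1r addr0.
  rewrite mul1r => h; lra.
have L1 : L (fun _ => 1) = 1.
  have bg1 : bfun (fun _ : prodS S n => (1 : R)) by exact: bfun_cst.
  have := hE _ bg1; rewrite U_one //.
  rewrite integral_cst //= mul1e probability_setT.
  by move=> [].
have Lub f : bfun f -> (forall x, `|f x| <= 1) -> `|L f| <= 1.
  move=> bf hf; have := @opnorm_ub R _ _ L f bf (@supnorm_le1 R _ f hf).
  by rewrite hnorm lee_fin.
have Lpos psi M : bfun psi -> 0 < M -> (forall x, 0 <= psi x <= M) -> 0 <= L psi.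
  move=> bpsi M0 hpsi.
  have bphi := bl (- M^-1) psi (fun _ => 1) bpsi (bc 1).
  have := Lub _ bphi; rewrite hlin // L1 => h.
  have : `|- M^-1 * L psi + 1| <= 1.
    apply: h => x; have /andP[p0 p1] := hpsi x.
    have q0 : 0 <= M^-1 * psi x by rewrite mulr_ge0 // invr_ge0 ltW.
    have q1 : M^-1 * psi x <= 1 by rewrite ler_pdivrMl // mulr1.
    rewrite ler_norml; apply/andP; split; lra.
  rewrite ler_norml => /andP[_ h2].
  have : 0 <= M^-1 * L psi by lra.
  by rewrite pmulr_rge0 // invr_gt0.
apply/le_anti/andP; split.
  apply/ereal_supP => _ [f [ccf sf] <-].
  by rewrite -hnorm; apply: opnorm_ub => //; exact: cc_bfun.
apply/lee_subgt0Pr => e e0.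
pose eps := e / N%:R.
have eps0 : 0 < eps by rewrite divr_gt0 // ltr0n.
have [K [cK hK]] := htight eps eps0.
have clK : closed K by exact: compact_closed.
have [f0 [W [cf0 f01 f0K [cW clW] f0W]]] := @ury R S hS lcS K cK.
pose F := fun x : prodS S N => \prod_(i < N) f0 (x i).
have [ccF F01] := @prodfun R S N f0 W cf0 f01 cW clW f0W.
have bF : bfun F by exact: cc_bfun.
pose g := fun y : prodS S n => (\1_(~` K) (y i0) : R).
have bg : bfun g.
  split; first exact: borel_indic_coord.
  by exists 1 => y; rewrite /g /indic; case: (_ \in _); rewrite ?normr0 ?normr1.
pose u := UNn N g.
have uP x := @u_props R S n N K i0 hnN' x.
have bu : bfun u.
  split; last by exists 1 => x; have [/andP[u0 u1] _] := uP x; rewrite ger0_norm.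
  have bs : borel_fun (fun x : prodS S N =>
     \sum_(s : {ffun 'I_n -> 'I_N} | injectiveb s) g (Defs.reindex s x)).
    apply: borel_fun_sum => // s.
    exact: (@borel_indic_coord R S N y0 K (s i0) clK).
  have := @borel_fun_lin R _ y0 ((N ^_ n)%:R^-1) _ _ bs (@borel_fun_cst R _ y0 0).
  rewrite (_ : (fun x => _) = u) //; apply: funext => x; rewrite addr0.
  by [].
have Lu : L u <= eps.
  pose A := X @^-1` [set y : prodS S n | K (y i0)].
  have mA : measurable A := hX _ (@borel_coordK S n K i0 clK).
  have h := hE g bg.
  have hI : (\int[P]_w (g (X w))%:E = P (~` A))%E.
    rewrite -(setIT (~` A)) -integral_indic //; last exact: measurableC.
  rewrite hI probability_setC // in h.
  have : ((L u)%:E <= (1 - (1 - eps))%:E)%E.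
    by rewrite -/u h EFinB; apply: leeB.
  rewrite lee_fin; lra.
pose Fm := fun x : prodS S N => (-1) * F x + 1.
pose G := fun x : prodS S N => N%:R * u x + 0.
pose psi := fun x : prodS S N => (-1) * Fm x + G x.
have bFm : bfun Fm by apply: bl.
have bG : bfun G by apply: bl.
have bpsi : bfun psi by apply: bl.
have LFm : L Fm = - L F + 1 by rewrite /Fm hlin // L1 mulN1r.
have LG : L G = N%:R * L u by rewrite /G hlin // L0 addr0.
have Lpsi : L psi = - L Fm + L G by rewrite /psi hlin // mulN1r.
have N0r : 0 < N%:R :> R by rewrite ltr0n.
have psi0 : 0 <= L psi.
  apply: (Lpos psi N%:R bpsi N0r) => x.
  have [/andP[u0 u1] uK] := uP x.
  have /andP[F0 F1] := F01 x.
  have F0' : 0 <= F x := F0.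
  have F1' : F x <= 1 := F1.
  rewrite /psi /Fm /G.
  have [allK|] := pselect (forall i, K (x i)).
    have -> : F x = 1 by rewrite /F big1 // => i _; exact: f0K.
    have : 0 <= N%:R * u x by rewrite mulr_ge0 // ltW.
    move=> h0; apply/andP; split; first lra.
    by have : N%:R * u x <= N%:R * 1 := ler_wpM2l (ltW N0r) u1; lra.
  move=> /existsNP [j nKj]; have h1 : 1 <= N%:R * u x := uK j nKj.
  have : N%:R * u x <= N%:R * 1 := ler_wpM2l (ltW N0r) u1.
  move=> h2; apply/andP; split; lra.
have LFge : 1 - e <= L F.
  have eN : N%:R * eps = e by rewrite /eps mulrC divfK // lt0r_neq0.
  have : N%:R * L u <= N%:R * eps := ler_wpM2l (ltW N0r) Lu.
  rewrite eN; rewrite Lpsi LFm LG in psi0; lra.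
apply: (le_trans _ (@opnorm_ub R _ _ L F ccF _)); last first.
  by apply: supnorm_le1 => x; have /andP[F0 F1] := F01 x; rewrite ger0_norm.
rewrite -EFinD lee_fin; apply: (le_trans LFge); exact: ler_norm.
Qed.
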